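(* For every positive integer $m$ and every integer $n\ge 0$, \[ \sum_{i=0}^{n} q^{-2i}q^{m(i^2+2i)}\frac{(1-q^{i+1})^3(1+q^{i+1})}{(1-q)(1-q^{n+1})(1-q^{n+2})} =\sum_{0\leq k_m\leq\dots\leq k_1\leq n}q^{-2k_m}q^{\sum_{j=1}^m(k_j^2+2k_j)} \frac{(q)_n^2}{(q)_{k_m}^2(q)_{n-k_1}\prod_{j=1}^{m-1}(q)_{k_j-k_{j+1}}} \cdot\frac{(1-q^{n+1})(1-q^{n+2})}{(1-q^{n-k_m+1})(1-q^{n-k_m+2})} \] as rational functions of $q$ (the empty product for $m=1$ equals $1$).
   Context: $(q)_k=\prod_{l=1}^{k}(1-q^l)$ for $k\ge0$, $(q)_0=1$. *)

(* Defs.v *)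
From HB Require Import structures.
From mathcomp Require Import all_boot all_order all_algebra.
Set Implicit Arguments. Unset Strict Implicit. Unset Printing Implicit Defensive.
Import Order.TTheory GRing.Theory Num.Theory.
Local Open Scope ring_scope.

Definition RF : fieldType := {fraction {poly rat}}.

Definition qX : RF := tofrac ('X : {poly rat}).

Definition qpoch (R : nzRingType) (q : R) (k : nat) : R :=
  \prod_(1 <= l < k.+1) (1 - q ^+ l).

(* Main.v *)
Require Import Defs.
From HB Require Import structures.
From mathcomp Require Import all_boot all_order all_algebra.
From mathcomp Require Import ring zify.
Import Order.TTheory GRing.Theory Num.Theory.
Local Open Scope ring_scope.

Lemma qX_neq0 : qX != 0.
Proof. by rewrite /qX tofrac_eq0 polyX_eq0. Qed.

Lemma qX_pow_neq1 j : (0 < j)%N -> 1 - qX ^+ j != 0.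
Proof.
move=> hj; rewrite /qX -tofracXn -tofrac1 -tofracB tofrac_eq0 subr_eq0.
apply/eqP=> /(congr1 (fun p : {poly rat} => size p)).
by rewrite size_polyXn size_poly1; case: j hj.
Qed.

Section Gen.
Variables (R : fieldType) (q : R).
Hypotheses (q0 : q != 0) (hq : forall j, (0 < j)%N -> 1 - q ^+ j != 0).
Local Notation P := (qpoch q).

Lemma PS n : P n.+1 = P n * (1 - q ^+ n.+1).
Proof. by rewrite /qpoch big_nat_recr. Qed.
Lemma P0 : P 0 = 1.
Proof. by rewrite /qpoch big_geq. Qed.
Lemma Pn0 n : P n != 0.
Proof. elim: n => [|n IH]; first by rewrite P0 oner_neq0.
by rewrite PS mulf_neq0 // hq. Qed.
Lemma hqS n : 1 - q ^+ n.+1 != 0. Proof. exact: hq. Qed.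
Lemma qXn0 n : q ^+ n != 0. Proof. exact: expf_neq0. Qed.

Definition U b M j := q ^+ (j^2 + b*j) * (P M * P (M+b)) / (P (M-j) * P j * P (j+b)).
Definition G b M j := - q ^+ (M.+1 - j) * (1 - q^+j) * (1 - q^+(j+b)) * q ^+ (j^2 + b*j)
   * (P M * P (M+b)) / (P (M.+1 - j) * P j * P (j+b)).

Lemma UG b i j : U b (i+j).+1 j = U b (i+j) j + G b (i+j) j.+1 - G b (i+j) j.
Proof.
rewrite /U /G.
have e1 : ((i+j).+1 - j = i.+1)%N by lia.
have e2 : ((i+j) - j = i)%N by lia.
have e3 : ((i+j).+1 - j.+1 = i)%N by lia.
have e4 : (j.+1 ^ 2 + b * j.+1 = (j^2 + b*j) + (j + j + b).+1)%N.
  by rewrite !expnS !expn0 !muln1; nia.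
rewrite e1 e2 e3 e4 !addSn !PS.
have := Pn0 i; have := Pn0 j; have := Pn0 (j+b); have := Pn0 (i+j); have := Pn0 (i+j+b).
have := hqS i; have := hqS j; have := hqS (j+b); have := hqS (i+j); have := hqS (i+j+b).
rewrite (exprD q (j^2+b*j)).
set w := q ^+ (j^2 + b*j).
rewrite !exprS !exprD.
clearbody w.
move=> *.
field.
by repeat (apply/andP; split); assumption.
Qed.

Lemma G0 b M : G b M 0 = 0.
Proof. by rewrite /G expr0 subrr !(mulr0, mul0r). Qed.

Lemma Gtop b M : G b M M.+1 = - U b M.+1 M.+1.
Proof.
rewrite /G /U subnn expr0 P0 addSn !PS.
have := Pn0 M; have := Pn0 (M+b); have := hqS M; have := hqS (M+b).
set w := q ^+ _; clearbody w.
move=> *; field.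
by repeat (apply/andP; split); assumption.
Qed.

Lemma Usum b M : \sum_(j < M.+1) U b M j = 1.
Proof.
elim: M => [|M IH].
  rewrite big_ord1 /U /= subnn muln0 addn0 add0n expr0 P0 !mul1r divff //.
  exact: Pn0.
rewrite big_ord_recr /=.
have -> : \sum_(j < M.+1) U b M.+1 j
    = \sum_(j < M.+1) U b M j + \sum_(j < M.+1) (G b M j.+1 - G b M j).
  rewrite -big_split /=; apply: eq_bigr => j _.
  have hj : (j <= M)%N by rewrite -ltnS.
  move: (UG b (M - j) j); rewrite subnK // => ->; exact/esym/addrA.
rewrite IH -(big_mkord xpredT (fun j => G b M j.+1 - G b M j)) telescope_sumr //.
by rewrite G0 subr0 Gtop subrK.
Qed.

Lemma bailey r n : (r <= n)%N ->
  \sum_(r <= k < n.+1) q ^+ (k^2 + 2*k) / (P (n-k) * P (k-r) * P (k+r+2))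
  = q ^+ (r^2 + 2*r) / (P (n-r) * P (n+r+2)).
Proof.
move=> hrn.
set b := (r + r + 2)%N; set M := (n - r)%N.
have hM : (n.+1 - r = M.+1)%N by rewrite /M subSn.
have hS := Usum b M.
rewrite -{1}(add0n r) big_addn hM.
transitivity (q ^+ (r^2 + 2*r) / (P M * P (M + b)) * \sum_(j < M.+1) U b M j).
  rewrite big_mkord mulr_sumr; apply: eq_bigr => j _.
  have hj : (j <= M)%N by rewrite -ltnS.
  have e1 : (n - (j + r) = M - j)%N by rewrite /M; lia.
  have e2 : (j + r - r = j)%N by lia.
  have e3 : (j + r + r + 2 = j + b)%N by rewrite /b; lia.
  have e4 : ((j + r) ^ 2 + 2 * (j + r) = (r^2 + 2*r) + (j^2 + b*j))%N.
    by rewrite /b !expnS !expn0 !muln1; nia.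
  rewrite e1 e2 e3 e4 exprD /U.
  have := Pn0 M; have := Pn0 (M+b); have := Pn0 (M-j); have := Pn0 j; have := Pn0 (j+b).
  have := qXn0 (r^2+2*r); have := qXn0 (j^2+b*j).
  move=> *; field.
  by repeat (apply/andP; split); assumption.
rewrite hS mulr1; congr (_ / (_ * P _)); rewrite /M /b; lia.
Qed.

Lemma expr2n n : q ^+ (2 * n) = q ^+ n * q ^+ n.
Proof. by rewrite mul2n -addnn exprD. Qed.

Definition t2 N k r := (1 - q ^+ r.+1) ^+ 2 * (1 - q ^+ (2 * r).+2) * P (N - r) * P (N + r + 2)
   / (q ^+ (2 * r) * P (k - r) * P (k + r + 2)).
Definition Fk N k := (1 - q) * (1 - q ^+ N.+1) * (1 - q ^+ N.+2) * P N * P (N + 2) * P (N - k)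
   / (q ^+ (2 * k) * P k ^+ 2 * P (N - k + 2)).
Definition U2 N k r := t2 N k r / Fk N k.
Definition G2 N k r := - q ^+ 2 * (1 - q ^+ r) ^+ 2 * (1 - q ^+ r.+1) ^+ 2 * P (N.+1 - r) * P (N + r + 2)
   / (q ^+ (2 * r) * (1 - q ^+ (N - k + 2)) * P (k.+1 - r) * P (k + r + 2) * Fk N k).

Lemma UG2 r a c : U2 (r+a+c).+1 (r+a).+1 r
   = U2 (r+a+c).+1 (r+a) r + G2 (r+a+c).+1 (r+a) r.+1 - G2 (r+a+c).+1 (r+a) r.
Proof.
rewrite /U2 /G2 /t2 /Fk.
have := hqS (0); have := hqS ((r+a+c).+1); have := hqS ((r+a+c).+2); have := hqS (r+a+c); have := hqS (r); have := hqS (r.+1); have := hqS ((2*r).+1); have := hqS (a); have := hqS (c); have := hqS (c.+1); have := hqS (c.+2); have := hqS (a+c); have := hqS ((a+c).+1); have := hqS (r+r+a+c); have := hqS ((r+r+a+c).+1); have := hqS ((r+r+a+c).+2); have := hqS ((r+r+a+c).+3); have := hqS (r+r+a); have := hqS ((r+r+a).+1); have := hqS ((r+r+a).+2); have := hqS (r+a).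
have := Pn0 (a+c); have := Pn0 (r+r+a+c); have := Pn0 (a); have := Pn0 (r+r+a); have := Pn0 (r+a+c); have := Pn0 (c); have := Pn0 (r+a); have := qXn0 r; have := qXn0 a; have := qXn0 c; have := q0.
rewrite (_ : ((r + a + c).+1 - (r + a).+1 + 2 = c.+2)%N); last by lia.
rewrite (_ : ((r + a + c).+1 - (r + a) + 2 = c.+3)%N); last by lia.
rewrite (_ : ((r + a + c).+1 - r = (a + c).+1)%N); last by lia.
rewrite (_ : ((r + a + c).+1 + r + 2 = (r + r + a + c).+3)%N); last by lia.
rewrite (_ : ((r + a).+1 - r = a.+1)%N); last by lia.
rewrite (_ : ((r + a).+1 + r + 2 = (r + r + a).+3)%N); last by lia.
rewrite (_ : ((r + a + c).+1 + 2 = (r + a + c).+3)%N); last by lia.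
rewrite (_ : ((r + a + c).+1 - (r + a).+1 = c)%N); last by lia.
rewrite (_ : (r + a - r = a)%N); last by lia.
rewrite (_ : (r + a + r + 2 = (r + r + a).+2)%N); last by lia.
rewrite (_ : ((r + a + c).+1 - (r + a) = c.+1)%N); last by lia.
rewrite (_ : ((r + a + c).+2 - r.+1 = (a + c).+1)%N); last by lia.
rewrite (_ : ((r + a + c).+1 + r.+1 + 2 = (r + r + a + c).+4)%N); last by lia.
rewrite (_ : ((r + a).+1 - r.+1 = a)%N); last by lia.
rewrite (_ : (r + a + r.+1 + 2 = (r + r + a).+3)%N); last by lia.
rewrite (_ : ((r + a + c).+2 - r = (a + c).+2)%N); last by lia.
rewrite !PS !expr2n !exprS ?expr2n ?exprS ?exprD ?expr0 ?mulr1.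
move=> *.
field.
by repeat (apply/andP; split); assumption.
Qed.

Lemma G20 N k : G2 N k 0 = 0.
Proof. by rewrite /G2 expr0 subrr expr0n /= !(mulr0, mul0r). Qed.

Lemma U2base N : U2 N 0 0 = 1.
Proof.
rewrite /U2 /t2 /Fk !subn0 !add0n !addn0 !muln0 !expr0 !P0 (_ : (N + 2 = N.+2)%N); last by lia.
rewrite !PS P0.
have := Pn0 N; have := hqS N; have := hqS N.+1; have := hqS 0; have := hqS 1.
rewrite ?expr1 ?expr0 ?exprS ?expr0 ?mulr1.
move=> *; field.
by repeat (apply/andP; split); assumption.
Qed.

Lemma G2top k c : G2 (k+c).+1 k k.+1 = - U2 (k+c).+1 k.+1 k.+1.
Proof.
rewrite /G2 /U2 /t2 /Fk.
have := hqS (0); have := hqS (c); have := hqS (c.+1); have := hqS (c.+2); have := hqS (k); have := hqS (k.+1); have := hqS (k+k); have := hqS ((k+k).+1); have := hqS ((k+k).+2); have := hqS ((k+k).+3); have := hqS (k+c); have := hqS ((k+c).+1); have := hqS ((k+c).+2); have := hqS (k+k+c); have := hqS ((k+k+c).+1); have := hqS ((k+k+c).+2); have := hqS ((k+k+c).+3); have := hqS ((2*k.+1).+1).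
have := Pn0 (c); have := Pn0 (k+k+c); have := Pn0 (k+k); have := Pn0 (k+c); have := Pn0 (k); have := qXn0 k; have := qXn0 c; have := q0.
rewrite (_ : ((k + c).+2 - k.+1 = c.+1)%N); last by lia.
rewrite (_ : ((k + c).+1 + k.+1 + 2 = (k + k + c).+4)%N); last by lia.
rewrite (_ : ((k + c).+1 - k + 2 = c.+3)%N); last by lia.
rewrite (_ : (k.+1 - k.+1 = 0)%N); last by lia.
rewrite (_ : (k + k.+1 + 2 = (k + k).+3)%N); last by lia.
rewrite (_ : ((k + c).+1 + 2 = (k + c).+3)%N); last by lia.
rewrite (_ : ((k + c).+1 - k = c.+1)%N); last by lia.
rewrite (_ : ((k + c).+1 - k.+1 + 2 = c.+2)%N); last by lia.
rewrite (_ : ((k + c).+1 - k.+1 = c)%N); last by lia.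
rewrite (_ : (k.+1 + k.+1 + 2 = (k + k).+4)%N); last by lia.
rewrite (_ : ((2 * k.+1).+2 = (k + k).+4)%N); last by lia.
rewrite (_ : (2 * k.+1 = (k + k).+2)%N); last by lia.
rewrite (_ : (2 * k = (k + k))%N); last by lia.
rewrite !PS P0 ?exprS ?exprD ?expr0 ?mulr1.
move=> *.
field.
by repeat (apply/andP; split); assumption.
Qed.

Lemma U2sum N k : (k <= N)%N -> \sum_(r < k.+1) U2 N k r = 1.
Proof.
elim: k => [|k IH] hk; first by rewrite big_ord1 U2base.
have hk' : (k <= N)%N by apply: ltnW.
set c := (N - k.+1)%N.
have hN : N = (k + c).+1 by rewrite /c; lia.
rewrite big_ord_recr /=.
have -> : \sum_(r < k.+1) U2 N k.+1 r
    = \sum_(r < k.+1) U2 N k r + \sum_(r < k.+1) (G2 N k r.+1 - G2 N k r).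
  rewrite -big_split /=; apply: eq_bigr => r _.
  have hr : (r <= k)%N by rewrite -ltnS.
  move: (UG2 r (k - r) c); rewrite subnKC // -hN => ->.
  exact/esym/addrA.
rewrite IH // -(big_mkord xpredT (fun j => G2 N k j.+1 - G2 N k j)) telescope_sumr //.
by rewrite G20 subr0 hN G2top -hN subrK.
Qed.

Definition ftail N k := q ^- (2*k) * (P N ^+ 2 / P k ^+ 2)
  * ((1 - q ^+ N.+1) * (1 - q ^+ N.+2) / ((1 - q ^+ (N - k).+1) * (1 - q ^+ (N - k).+2))).
Definition cc N r := q ^- (2*r) * ((1 - q ^+ r.+1) ^+ 3 * (1 + q ^+ r.+1)) * P (N - r) * P (N + r + 2)
  / ((1 - q) * (1 - q ^+ N.+1) * (1 - q ^+ N.+2)).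

Lemma ftail_dec N k : (k <= N)%N ->
  ftail N k = \sum_(r < k.+1) cc N r / (P (k - r) * P (k + r + 2)).
Proof.
move=> hk.
rewrite -[LHS]mulr1 -(@U2sum N k hk) mulr_sumr; apply: eq_bigr => r _.
rewrite /ftail /cc /U2 /t2 /Fk.
rewrite (_ : (N + 2 = N.+2)%N); last by lia.
rewrite (_ : (N - k + 2 = (N - k).+2)%N); last by lia.
have := hqS N; have := hqS N.+1; have := hqS (N - k); have := hqS (N - k).+1; have := hqS 0.
have := Pn0 (N - r); have := Pn0 (N + r + 2); have := Pn0 (k - r); have := Pn0 (k + r + 2).
have := Pn0 N; have := Pn0 (N - k); have := Pn0 k; have := qXn0 r; have := qXn0 k.
rewrite !PS !expr2n ?exprS ?expr2n ?expr0 ?mulr1.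
move=> *; field.
by repeat (apply/andP; split); assumption.
Qed.

Fixpoint H N p (s : seq nat) : R :=
  if s is k :: s' then q ^+ (k^2 + 2*k) / P (p - k) * H N k s' else ftail N p.

Definition CS N m n := \sum_(t : m.-tuple 'I_N.+1 |
    sorted (fun a b : nat => (b <= a)%N) (map val t) && all (fun x => (x <= n)%N) (map val t))
  H N n (map val t).

Lemma sum_tuple_cons N m n (F : seq nat -> R) :
  \sum_(t : m.+1.-tuple 'I_N.+1 |
    sorted (fun a b : nat => (b <= a)%N) (map val t) && all (fun x => (x <= n)%N) (map val t))
    F (map val t)
  = \sum_(k < N.+1 | (k <= n)%N) \sum_(t : m.-tuple 'I_N.+1 |
    sorted (fun a b : nat => (b <= a)%N) (map val t) && all (fun x => (x <= k)%N) (map val t))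
    F (val k :: map val t).
Proof.
rewrite pair_big_dep /=.
pose h (p : 'I_N.+1 * m.-tuple 'I_N.+1) : m.+1.-tuple 'I_N.+1 := [tuple of p.1 :: p.2].
pose g (t : m.+1.-tuple 'I_N.+1) := (thead t, [tuple of behead t]).
rewrite (reindex h); last first.
  exists g => [[k t] _ | t _]; rewrite /g /h /=.
    by rewrite theadE; congr pair; apply: val_inj.
  by rewrite [RHS]tuple_eta.
apply: eq_big => [[k t]|[k t] _] //=.
rewrite path_sortedE; last by move=> a b c /= h1 h2; exact: leq_trans h2 h1.
case: (leqP k n) => hkn /=; last by rewrite !andbF.
case: (sorted _ _); rewrite /= ?andbF //.
case ha: (all _ _); rewrite /= //.
apply/allP => x hx; apply: leq_trans hkn; exact: (allP ha).
Qed.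

Lemma CS0 N n : CS N 0 n = ftail N n.
Proof.
rewrite /CS (big_pred1 [tuple]) //= => t.
by rewrite tuple0.
Qed.

Lemma CS_step N m n : CS N m.+1 n
  = \sum_(k < N.+1 | (k <= n)%N) q ^+ (k^2 + 2*k) / P (n - k) * CS N m k.
Proof. by rewrite /CS sum_tuple_cons; apply: eq_bigr => k _; rewrite mulr_sumr. Qed.

Lemma widen_sum (F : nat -> R) (Pr : pred nat) n N : (n <= N)%N ->
  \sum_(k < N.+1 | (k <= n)%N && Pr k) F k = \sum_(k < n.+1 | Pr k) F k.
Proof.
move=> hn; rewrite -big_mkord.
rewrite [RHS](big_nat_widen _ _ N.+1) // big_mkord; apply: eq_bigl => k.
by rewrite ltnS andbC.
Qed.

Lemma widen_sum0 (F : nat -> R) n N : (n <= N)%N ->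
  \sum_(k < N.+1 | (k <= n)%N) F k = \sum_(k < n.+1) F k.
Proof.
move=> hn; rewrite -(widen_sum F xpredT n N hn); apply: eq_bigl => k.
by rewrite andbT.
Qed.

Definition tm N m n k r := q ^+ (k^2 + 2*k) / P (n - k) *
   (cc N r * q ^+ (m * (r^2 + 2*r)) / (P (k - r) * P (k + r + 2))).

Lemma CS_closed N m n : (n <= N)%N ->
  CS N m n = \sum_(r < n.+1) cc N r * q ^+ (m * (r^2 + 2*r)) / (P (n - r) * P (n + r + 2)).
Proof.
elim: m n => [|m IH] n hn.
  rewrite CS0 (@ftail_dec N n hn); apply: eq_bigr => r _.
  by rewrite mul0n expr0 mulr1.
rewrite CS_step.
transitivity (\sum_(k < N.+1 | (k <= n)%N) \sum_(r < N.+1 | (r <= k)%N) tm N m n k r).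
  apply: eq_bigr => k hk.
  have hkN : (k <= N)%N by apply: leq_trans hn.
  rewrite IH // mulr_sumr.
  exact: (esym (widen_sum0 (tm N m n k) _ _ hkN)).
rewrite (exchange_big_dep (fun r : 'I_N.+1 => (r <= n)%N)) /=; last first.
  by move=> k r hk hr; apply: leq_trans hk.
rewrite (widen_sum0 (fun j => \sum_(i < N.+1 | (i <= n)%N && (j <= i)%N) tm N m n i j) _ _ hn).
apply: eq_bigr => r _.
have hr : (r <= n)%N by rewrite -ltnS.
rewrite (widen_sum (fun i => tm N m n i r) (fun i => (r <= i)%N) _ _ hn).
rewrite -(big_geq_mkord r n.+1 xpredT (fun i => tm N m n i r)).
transitivity (cc N r * q ^+ (m * (r^2 + 2*r)) * \sum_(r <= k < n.+1)
   q ^+ (k^2 + 2*k) / (P (n-k) * P (k-r) * P (k+r+2))).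
  rewrite mulr_sumr; apply: eq_big_nat => k hk; rewrite /tm.
  have := Pn0 (n - k); have := Pn0 (k - r); have := Pn0 (k + r + 2).
  move=> *; field.
  by repeat (apply/andP; split); assumption.
rewrite bailey // (mulSn m) (exprD q (r^2 + 2*r)).
have := Pn0 (n - r); have := Pn0 (n + r + 2).
move=> *; field.
by repeat (apply/andP; split); assumption.
Qed.

Definition T N p (s : seq nat) :=
  let m := size s in
  let kj := fun j : nat => nth 0%N s j in
  q ^- (2 * kj m.-1) * q ^+ (\sum_(j < m) (kj j ^ 2 + 2 * kj j))
  * (P N ^+ 2 / (P (kj m.-1) ^+ 2 * P (p - kj 0%N) * \prod_(j < m.-1) P (kj j - kj j.+1)))
  * ((1 - q ^+ N.+1) * (1 - q ^+ N.+2)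
     / ((1 - q ^+ (N - kj m.-1).+1) * (1 - q ^+ (N - kj m.-1).+2))).

Lemma HT N s p : s != [::] -> H N p s = T N p s.
Proof.
elim: s p => [//|k s IH] p _.
case: s IH => [|k' s] IH.
  rewrite /T /= big_ord1 big_ord0 /ftail.
  have := Pn0 (p - k); have := Pn0 k; have := Pn0 N; have := qXn0 (2*k); have := qXn0 (k^2 + 2*k).
  have := hqS (N - k); have := hqS (N - k).+1.
  move=> *; field.
  by repeat (apply/andP; split); assumption.
rewrite (_ : H N p (k :: k' :: s) = q ^+ (k^2 + 2*k) / P (p - k) * H N k (k' :: s)) // IH // /T /=.
have -> : (\sum_(j < (size s).+2) (nth 0 [:: k, k' & s] j ^ 2 + 2 * nth 0 [:: k, k' & s] j)
   = k ^ 2 + 2 * k + \sum_(j < (size s).+1) (nth 0 (k' :: s) j ^ 2 + 2 * nth 0 (k' :: s) j))%N.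
  by rewrite big_ord_recl; congr (_ + _)%N; apply: eq_bigr => j _; rewrite lift0.
have -> : \prod_(j < (size s).+1) P (nth 0%N [:: k, k' & s] j - nth 0%N (k' :: s) j)
   = P (k - k') * \prod_(j < size s) P (nth 0%N (k' :: s) j - nth 0%N s j).
  by rewrite big_ord_recl; congr (_ * _); apply: eq_bigr => j _; rewrite lift0.
set L := nth 0%N (k' :: s) (size s).
set S1 := \sum_(j < (size s).+1) _.
set Pr := \prod_(j < size s) _.
have hPr : Pr != 0 by rewrite /Pr; apply/prodf_neq0 => i _; exact: Pn0.
have := Pn0 (p - k); have := Pn0 (k - k'); have := Pn0 L; have := Pn0 N; have := qXn0 (2*L).
have := qXn0 (k^2 + 2*k); have := qXn0 S1.
have := hqS (N - L); have := hqS (N - L).+1.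
rewrite (exprD _ (k ^ 2 + 2 * k) S1).
move=> *; field.
by repeat (apply/andP; split); assumption.
Qed.
Lemma main_gen (m n : nat) (hm : (0 < m)%N) :
  \sum_(i < n.+1)
     q ^- (2 * i) * q ^+ (m * (i ^ 2 + 2 * i))
     * ((1 - q ^+ i.+1) ^+ 3 * (1 + q ^+ i.+1)
        / ((1 - q) * (1 - q ^+ n.+1) * (1 - q ^+ n.+2)))
  =
  \sum_(k : m.-tuple 'I_n.+1 | sorted (fun a b : nat => (b <= a)%N) (map val k))
     let ks := map val k in
     let kj := fun j : nat => nth 0%N ks j in
     q ^- (2 * kj m.-1)
     * q ^+ (\sum_(j < m) (kj j ^ 2 + 2 * kj j))
     * (qpoch q n ^+ 2
        / (qpoch q (kj m.-1) ^+ 2 * qpoch q (n - kj 0%N)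
           * \prod_(j < m.-1) qpoch q (kj j - kj j.+1)))
     * ((1 - q ^+ n.+1) * (1 - q ^+ n.+2)
        / ((1 - q ^+ (n - kj m.-1).+1) * (1 - q ^+ (n - kj m.-1).+2))).
Proof.
transitivity (CS n m n); last first.
  rewrite /CS; apply: eq_big => t.
    rewrite (_ : all _ _ = true) ?andbT //.
    apply/allP => x /mapP [y _ ->]; by rewrite -ltnS ltn_ord.
  move=> _; rewrite HT //; last by rewrite -size_eq0 size_map size_tuple -lt0n.
  by rewrite /T size_map size_tuple.
rewrite CS_closed //; apply: eq_bigr => i _.
rewrite /cc.
have := Pn0 (n - i); have := Pn0 (n + i + 2).
have := hqS 0; have := hqS n; have := hqS n.+1; have := qXn0 (2 * i).
rewrite expr1.
move=> *; field.
by repeat (apply/andP; split); assumption.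
Qed.
End Gen.

(* A chain 0 <= k_m <= ... <= k_1 <= n is a tuple k with entries in 'I_n.+1,
   k_j (1-indexed) = nth 0 (map val k) (j-1), required non-increasing. *)
Theorem mainTheorem3 (m n : nat) (hm : (0 < m)%N) :
  let q := qX in
  \sum_(i < n.+1)
     q ^- (2 * i) * q ^+ (m * (i ^ 2 + 2 * i))
     * ((1 - q ^+ i.+1) ^+ 3 * (1 + q ^+ i.+1)
        / ((1 - q) * (1 - q ^+ n.+1) * (1 - q ^+ n.+2)))
  =
  \sum_(k : m.-tuple 'I_n.+1 | sorted (fun a b : nat => (b <= a)%N) (map val k))
     let ks := map val k in
     let kj := fun j : nat => nth 0%N ks j in
     q ^- (2 * kj m.-1)
     * q ^+ (\sum_(j < m) (kj j ^ 2 + 2 * kj j))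
     * (qpoch q n ^+ 2
        / (qpoch q (kj m.-1) ^+ 2 * qpoch q (n - kj 0%N)
           * \prod_(j < m.-1) qpoch q (kj j - kj j.+1)))
     * ((1 - q ^+ n.+1) * (1 - q ^+ n.+2)
        / ((1 - q ^+ (n - kj m.-1).+1) * (1 - q ^+ (n - kj m.-1).+2))).
Proof.
move=> q; exact: (@main_gen RF qX qX_neq0 qX_pow_neq1 m n hm).
Qed.
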